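(* Let $N=\{1,\ldots,n\}$ be a finite player set and let $\Gamma=(A,u)$ be a normal form game on $N$, where each $A_i\subseteq\mathbb{R}^{k_i}$ is compact, $A=A_1\times\cdots\times A_n$, and each $u_i\colon A\to\mathbb{R}$ is continuous. Suppose $\Gamma$ is separable, i.e. there are functions $h^i_j\colon A_j\to\mathbb{R}$ ($i,j\in N$) with $u_i(a)=\sum_{j\in N}h^i_j(a_j)$ for all $a\in A$ and $i\in N$, and let $B_j=\arg\max_{b_j\in A_j}h^j_j(b_j)\subseteq A_j$ be player $j$'s (constant) set of best responses. Suppose $\Gamma$ admits a socially optimal Nash equilibrium, i.e. a Nash equilibrium $a^\star\in A$ with $\sum_{i\in N}u_i(a^\star)=\bar v^\lambda(N)=\max_{a\in A}\sum_{i\in N}u_i(a)$. If for all coalitions $S\subseteq N$ and all players $j\in N$ $$\max_{a_j\in A_j}\sum_{i\in S}h^i_j(a_j)=\sum_{i\in S}\max_{a_j\in A_j}h^i_j(a_j)\quad\text{and}\quad \max_{a_j\in B_j}\sum_{i\in S}h^i_j(a_j)=\sum_{i\in S}\max_{a_j\in B_j}h^i_j(a_j),$$ then the generalised $\lambda$-Core of $\Gamma$ is non-empty: $\widehat{\mathcal{C}}^\lambda(\Gamma)\neq\varnothing$.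
   Context: Notation: for $S\subseteq N$, $A_S=\prod_{i\in S}A_i$, $A_{-S}=A_{N\setminus S}$, and a profile is written $a=(a_S,a_{-S})$. A Nash equilibrium is $a^*\in A$ with $u_i(a^* )\ge u_i(b_i,a^*_{-i})$ for all $i$ and $b_i\in A_i$. For a nonempty coalition $S\subsetneq N$ and a coalitional strategy $a_S\in A_S$, the reduced game has player set $N\setminus S$, strategy set $A_{-S}$, and payoffs $b_{-S}\mapsto u_j(a_S,b_{-S})$ for $j\in N\setminus S$; let $\mathsf{E}(S,a_S)\subseteq A_{-S}$ be its set of Nash equilibria. The generalised $\lambda$-characteristic function is $\bar v^\lambda(\varnothing)=0$, $\bar v^\lambda(N)=\max_{a\in A}\sum_{i\in N}u_i(a)$, and for $\varnothing\neq S\subsetneq N$, $$\bar v^\lambda(S)=\max_{a_S\in A_S}\ \max_{b_{-S}\in\mathsf{E}(S,a_S)}\sum_{i\in S}u_i(a_S,b_{-S}),$$ with value $-\infty$ when the relevant equilibrium set is empty. For a characteristic function $v$, its Core is $\mathcal{C}(v)=\{x\in\mathbb{R}^N:\sum_{i\in N}x_i=v(N),\ \sum_{i\in S}x_i\ge v(S)\text{ for all }S\subseteq N\}$. The generalised $\lambda$-Core of $\Gamma$ is $\widehat{\mathcal{C}}^\lambda(\Gamma)=\{a\in A: (u_1(a),\ldots,u_n(a))\in\mathcal{C}(\bar v^\lambda)\}$. *)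

(* Defs.v *)
From HB Require Import structures.
From mathcomp Require Import all_boot all_order all_algebra.
From mathcomp Require Import all_classical all_reals all_analysis.
Unset Printing Implicit Defensive.
Import Order.TTheory GRing.Theory Num.Theory.
Import numFieldNormedType.Exports.
Local Open Scope classical_set_scope.
Local Open Scope ring_scope.

Section Game.
Variables (R : realType) (n : nat) (k : 'I_n -> nat).

Definition profile := prod_topology (fun i : 'I_n => 'rV[R]_(k i)).

Definition pcoord (a : profile) (i : 'I_n) : 'rV[R]_(k i) :=
  (a : forall j, 'rV[R]_(k j)) i.

Variable A : forall i : 'I_n, set 'rV[R]_(k i).
Variable u : 'I_n -> profile -> R.

Definition in_A (a : profile) : Prop := forall i, A i (pcoord a i).

Definition deviate (a : profile) (i : 'I_n) (b : 'rV[R]_(k i)) : profile :=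
  dfwith (a : forall j, 'rV[R]_(k j)) i b.

Definition nash_eq (a : profile) : Prop :=
  in_A a /\ forall i (b : 'rV[R]_(k i)), A i b -> u i (deviate a i b) <= u i a.

Definition mix (S : {set 'I_n}) (a b : profile) : profile :=
  fun i => if i \in S then pcoord a i else pcoord b i.

Definition in_A_on (S : {set 'I_n}) (a : profile) : Prop :=
  forall i, i \in S -> A i (pcoord a i).

(* E(S, a_S): Nash equilibria b_{-S} of the reduced game with player set N \ S,
   strategy set A_{-S}, payoffs b_{-S} |-> u_j(a_S, b_{-S}).  Represented as full
   profiles b whose coordinates in S are irrelevant. *)
Definition reduced_eq (S : {set 'I_n}) (a b : profile) : Prop :=
  in_A_on (~: S) b /\
  forall j, j \notin S -> forall c : 'rV[R]_(k j), A j c ->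
    u j (mix S a (deviate b j c)) <= u j (mix S a b).

(* generalised lambda-characteristic function; "max" is rendered as the
   supremum in the extended reals (= -oo on the empty set, = max when attained) *)
Definition vbar (S : {set 'I_n}) : \bar R :=
  if S == finset.set0 then 0%E
  else if S == finset.setT then
    ereal_sup [set (\sum_(i < n) u i a)%:E | a in in_A]
  else
    ereal_sup [set x | exists a b, in_A_on S a /\ reduced_eq S a b /\
                         x = (\sum_(i in S) u i (mix S a b))%:E].

Definition core (v : {set 'I_n} -> \bar R) : set ('I_n -> R) :=
  [set x | (\sum_(i < n) x i)%:E = v finset.setT /\
           forall S : {set 'I_n}, (v S <= (\sum_(i in S) x i)%:E)%E].

Definition gen_lambda_core : set profile :=
  [set a | in_A a /\ core vbar (fun i => u i a)].

End Game.

Arguments pcoord {R n k} a i.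
Arguments in_A {R n k} A a.
Arguments deviate {R n k} a i b.
Arguments nash_eq {R n k} A u a.
Arguments mix {R n k} S a b.
Arguments in_A_on {R n k} A S a.
Arguments reduced_eq {R n k} A u S a b.
Arguments vbar {R n k} A u S.
Arguments core {R n} v x.
Arguments gen_lambda_core {R n k} A u _.

Definition emax (R : realType) (T : Type) (X : set T) (f : T -> R) : \bar R :=
  ereal_sup [set (f x)%:E | x in X].
Arguments emax {R T} X f.

(* Main.v *)
Require Import Defs.
From HB Require Import structures.
From mathcomp Require Import all_boot all_order all_algebra.
From mathcomp Require Import all_classical all_reals all_analysis.
Import Order.TTheory GRing.Theory Num.Theory.
Import numFieldNormedType.Exports.
Local Open Scope classical_set_scope.
Local Open Scope ring_scope.

Lemma sum_eq_le (R : realType) n (e : 'I_n -> \bar R) (r : 'I_n -> R) :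
  (forall i, (r i)%:E <= e i)%E ->
  (\sum_(i in (finset.setT : {set 'I_n})) e i = (\sum_(i < n) r i)%:E)%E ->
  forall i, (e i <= (r i)%:E)%E.
Proof.
move=> ge H i0.
have H1 : (\sum_(i < n) e i = (\sum_(i < n) r i)%:E)%E.
  by rewrite -H; apply: eq_bigl => i; rewrite finset.in_setT.
rewrite (bigD1 i0) //= (bigD1 i0 (P:=xpredT)) //= EFinD in H1.
have H2 : ((\sum_(i < n | i != i0) r i)%:E <= \sum_(i < n | i != i0) e i)%E.
  by rewrite -sumEFin; apply: lee_sum => i _; exact: ge.
rewrite -(leeD2rE _ _ (x:=(\sum_(i < n | i != i0) r i)%:E)) //.
rewrite -H1; exact: leeD2l.
Qed.

Theorem theorem1 (R : realType) (n : nat) (k : 'I_n -> nat)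
    (A : forall i : 'I_n, set 'rV[R]_(k i)) (u : 'I_n -> profile R n k -> R)
    (h : forall (i j : 'I_n), 'rV[R]_(k j) -> R) :
  (forall i, compact (A i)) ->
  (forall i, {within in_A A, continuous (u i)}) ->
  (* separability *)
  (forall a, in_A A a -> forall i, u i a = \sum_(j < n) h i j (pcoord a j)) ->
  (* B_j = argmax_{b_j in A_j} h^j_j(b_j) *)
  let B := fun j : 'I_n =>
    [set b : 'rV[R]_(k j) | A j b /\ forall c, A j c -> h j j c <= h j j b] in
  (* existence of a socially optimal Nash equilibrium *)
  (exists astar, nash_eq A u astar /\
     (\sum_(i < n) u i astar)%:E = vbar A u finset.setT) ->
  (forall (S : {set 'I_n}) (j : 'I_n),
     emax (A j) (fun aj => \sum_(i in S) h i j aj)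
       = (\sum_(i in S) emax (A j) (h i j))%E /\
     emax (B j) (fun aj => \sum_(i in S) h i j aj)
       = (\sum_(i in S) emax (B j) (h i j))%E) ->
  gen_lambda_core A u !=set0.
Proof.
move=> cA cu sep B [astar [[inA _] Hopt]] Hmax.
have sumT : forall (T : Type) (f : 'I_n -> T) (add : T -> T -> T) (z : T),
    \big[add/z]_(i in (finset.setT : {set 'I_n})) f i = \big[add/z]_(i < n) f i.
  by move=> T f add z; apply: eq_bigl => x; rewrite finset.in_setT.
have welf : forall (j : 'I_n) a, in_A A a ->
    ((\sum_(i < n) u i a)%:E <= vbar A u finset.setT)%E.
  move=> j a Ha; rewrite /vbar.
  case: ifP => [/eqP/setP/(_ j)|_]; first by rewrite finset.in_setT finset.in_set0.
  rewrite eqxx; apply: ereal_sup_ubound; by exists a.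
have devall : forall (j : 'I_n) c, A j c ->
    \sum_(i < n) h i j c <= \sum_(i < n) h i j (pcoord astar j).
  move=> j c Ac.
  have inD : in_A A (deviate astar j c).
    move=> l; rewrite /pcoord /deviate; case: (eqVneq j l) => [<-|ne].
      by rewrite dfwithin.
    by rewrite dfwithout //; apply: inA.
  have dev : \sum_(i < n) h i j c <= \sum_(i < n) h i j (pcoord astar j).
    have := welf j _ inD; rewrite -Hopt lee_fin.
    rewrite (eq_bigr _ (fun i _ => sep _ inD i)) (eq_bigr _ (fun i _ => sep _ inA i)).
    rewrite (exchange_big _ _ _ _ _ (fun i l => h i l (pcoord (deviate astar j c) l))).
    rewrite (exchange_big _ _ _ _ _ (fun i l => h i l (pcoord astar l))) /=.
    rewrite (bigD1 j) //= [X in _ <= X](bigD1 j) //=.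
    have -> : \sum_(l < n | l != j) \sum_(i < n) h i l (pcoord (deviate astar j c) l)
            = \sum_(l < n | l != j) \sum_(i < n) h i l (pcoord astar l).
      apply: eq_bigr => l lj; apply: eq_bigr => i2 _.
      by rewrite /pcoord /deviate dfwithout // eq_sym.
    by rewrite /pcoord /deviate dfwithin lerD2r.
  exact: dev.
have key : forall (j i : 'I_n) c, A j c -> h i j c <= h i j (pcoord astar j).
  move=> j i c Ac.
  have Ej : emax (A j) (fun aj => \sum_(i in finset.setT) h i j aj)
          = (\sum_(i < n) h i j (pcoord astar j))%:E.
    apply/eqP; rewrite eq_le; apply/andP; split.
      apply: ge_ereal_sup => x [y Ay <-]; rewrite lee_fin sumT.
      exact: devall.
    apply: ereal_sup_ubound; exists (pcoord astar j); first exact: inA.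
    by rewrite sumT.
  have G1 : forall i2, ((h i2 j (pcoord astar j))%:E <= emax (A j) (h i2 j))%E.
    by move=> i2; apply: ereal_sup_ubound; exists (pcoord astar j); first exact: inA.
  have G2 : (\sum_(i2 in finset.setT) emax (A j) (h i2 j)
             = (\sum_(i2 < n) h i2 j (pcoord astar j))%:E)%E.
    by rewrite -Ej; case: (Hmax finset.setT j).
  have L := @sum_eq_le R n (fun i => emax (A j) (h i j)) (fun i => h i j (pcoord astar j)) G1 G2 i.
  rewrite -lee_fin; apply: le_trans L.
  by apply: ereal_sup_ubound; exists c.
exists astar; split => //; split => //.
move=> S; rewrite /vbar.
case: ifP => [/eqP->|nS0]; first by rewrite finset.big_set0.
case: ifP => [/eqP HS|_]; first by move: nS0; rewrite HS => nS0; rewrite sumT Hopt /vbar nS0 eqxx.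
apply: ge_ereal_sup => x [a [b [Ha [[Hb _] ->]]]].
have inM : in_A A (mix S a b).
  move=> l; rewrite /pcoord /mix; case: ifP => Hl; first exact: Ha.
  by apply: Hb; rewrite finset.in_setC Hl.
rewrite lee_fin; apply: ler_sum => i _.
rewrite (sep _ inM) (sep _ inA); apply: ler_sum => l _.
apply: key; exact: inM.
Qed.
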